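(* Let $\alpha>1$ and let $d>1$ be an integer. Let $L_d(\alpha)=\{\alpha^n : n\in\mathbb{N}_0\}^d\subseteq\mathbb{R}^d$ and $k=\left\lfloor\sqrt{\tfrac{1}{\alpha-1}}\,\right\rfloor$. Then \[h(L_d(\alpha))\ge\binom{k+d-1}{d-1}.\]
   Context: For a set $S\subseteq\mathbb{R}^d$, the Helly number $h(S)$ is the smallest $h$ such that the following holds: for every finite family $\mathcal{F}$ of convex sets in $\mathbb{R}^d$, if every $h$ or fewer sets of $\mathcal{F}$ have a point of $S$ in their intersection, then the intersection of all sets of $\mathcal{F}$ contains a point of $S$. If no such $h$ exists, $h(S)=\infty$. Here $\mathbb{N}_0=\{0,1,2,\dots\}$. *)

(* Defs.v *)
From HB Require Import structures.
From mathcomp Require Import all_boot all_order all_algebra.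
From mathcomp Require Import reals.
Set Implicit Arguments. Unset Strict Implicit. Unset Printing Implicit Defensive.
Import Order.TTheory GRing.Theory Num.Theory.
Local Open Scope ring_scope.

Definition convex_set (R : realType) (d : nat) (C : 'rV[R]_d -> Prop) : Prop :=
  forall x y t, C x -> C y -> 0 <= t -> t <= 1 -> C (t *: x + (1 - t) *: y).

Definition helly_property (R : realType) (d : nat)
    (S : 'rV[R]_d -> Prop) (h : nat) : Prop :=
  forall (m : nat) (F : 'I_m -> ('rV[R]_d -> Prop)),
    (forall i, convex_set (F i)) ->
    (forall I : {set 'I_m}, (#|I| <= h)%N ->
        exists x, S x /\ forall i, i \in I -> F i x) ->
    exists x, S x /\ forall i, F i x.

(* h(S) >= N, where h(S) is the least h with the Helly property (or infinity
   if none exists): every h with the Helly property is at least N. *)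
Definition helly_number_ge (R : realType) (d : nat)
    (S : 'rV[R]_d -> Prop) (N : nat) : Prop :=
  forall h, helly_property S h -> (N <= h)%N.

Definition Ld (R : realType) (d : nat) (alpha : R) : 'rV[R]_d -> Prop :=
  fun x => forall i : 'I_d, exists n : nat, x ord0 i = alpha ^+ n.

(* Main.v *)
Require Import Defs.
From HB Require Import structures.
From mathcomp Require Import all_boot all_order all_algebra.
From mathcomp Require Import reals.
From mathcomp Require Import ring lra zify.
Import Order.TTheory GRing.Theory Num.Theory.
Local Open Scope ring_scope.

Lemma bern (R : realType) (x : R) (n : nat) : -1 <= x -> 1 + n%:R * x <= (1 + x) ^+ n.
Proof.
move=> hx; elim: n => [|n IH]; first by rewrite mul0r addr0 expr0.
rewrite exprS -natr1.
have h0 : 0 <= 1 + x by lra.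
have := ler_wpM2l h0 IH.
have : 0 <= n%:R * x * x by rewrite -mulrA mulr_ge0 // -expr2 sqr_ge0.
lra.
Qed.

Lemma vbound (R : realType) (a : R) (n : nat) : 1 <= a -> a ^+ n * (1 - n%:R * (a - 1)) <= 1.
Proof.
move=> ha; elim: n => [|n IH]; first by rewrite expr0 mul0r subr0 mulr1.
have hp : 0 <= a ^+ n by rewrite exprn_ge0 //; lra.
rewrite exprS -natr1.
have e : a * a ^+ n * (1 - (n%:R + 1) * (a - 1)) =
   a ^+ n * (1 - n%:R * (a - 1)) - a ^+ n * (n%:R + 1) * (a - 1) ^+ 2.
  by rewrite expr2; ring.
rewrite e.
have : 0 <= a ^+ n * (n%:R + 1) * (a - 1) ^+ 2.
  have h1 : 0 <= n%:R + 1 :> R by rewrite addr_ge0 ?ler0n.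
  by rewrite mulr_ge0 ?sqr_ge0 // mulr_ge0.
lra.
Qed.

Lemma convp (R : realType) (a : R) (p k : nat) : 1 <= a -> (p <= k)%N ->
  k%:R * (a ^+ p - 1) <= p%:R * (a ^+ k - 1).
Proof.
move=> ha hpk.
have hv := @vbound R a p ha.
have hW' : a ^+ (k - p) >= 1 + (k - p)%:R * (a - 1).
  have := @bern R (a - 1) (k - p); rewrite (_ : 1 + (a - 1) = a); last by ring.
  apply; lra.
have ek : a ^+ k = a ^+ p * a ^+ (k - p) by rewrite -exprD subnKC.
rewrite ek natrB // in hW' *.
have hp : 0 <= a ^+ p by rewrite exprn_ge0 //; lra.
set v := a ^+ p in hv hp *; set W := a ^+ (k - p) in hW' *.
have hpn : 0 <= p%:R :> R by [].
have hkp : p%:R <= k%:R :> R by rewrite ler_nat.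
set P := p%:R in hv hpn hkp hW' *; set K := k%:R in hkp hW' *.
have : P * v * (W - (1 + (K - P) * (a - 1))) >= 0.
  by rewrite mulr_ge0 // ?mulr_ge0 //; lra.
have : (K - P) * (1 - v + P * (a - 1) * v) >= 0.
  by rewrite mulr_ge0 //; lra.
nra.
Qed.


Lemma keyineq (R : realType) (a : R) (c : nat) : 1 < a ->
  (c.+1 ^ 2)%:R * (a - 1) <= 1 -> a ^+ c + (a ^+ c.+1)^-1 < 2.
Proof.
move=> ha hc.
have hv := @vbound R a c (ltW ha).
have hv1 : 1 <= a ^+ c by rewrite exprn_ege1 // ltW.
set v := a ^+ c in hv hv1 *.
rewrite exprS -/v.
set e := a - 1 in hc hv.
have he : 0 < e by rewrite /e subr_gt0.
have ea : a = 1 + e by rewrite /e; ring.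
rewrite natrX -addn1 natrD in hc.
set C := c%:R in hc hv *.
have hC : 0 <= C by rewrite ler0n.
have hav : 0 < a * v by rewrite mulr_gt0 //; lra.
rewrite -(ltr_pM2r hav) mulrDl mulVf ?gt_eqF //.
(* need a v^2 + 1 < 2 a v *)
have h1 : (1 - C * e) ^+ 2 - a * C ^+ 2 * e >= e.
  rewrite ea -subr_ge0; rewrite -subr_ge0 in hc.
  have -> : (1 - C * e) ^+ 2 - (1 + e) * C ^+ 2 * e - e = 1 - (C + 1) ^+ 2 * 1%:R * e.
    by ring.
  by rewrite mulr1.
have hCe : 0 <= 1 - C * e.
  have : C * e <= (C + 1) ^+ 2 * e by rewrite ler_wpM2r ?ltW //; nra.
  lra.
have hw : ((1 - C * e) * v) ^+ 2 <= 1.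
  rewrite -[1](expr1n _ 2); rewrite ler_pXn2r ?nnegrE ?mulr_ge0 //; lra.
have hv2 : 0 <= v - 1 <= C * e * v by apply/andP; split; lra.
have hsq : (v - 1) ^+ 2 <= (C * e * v) ^+ 2.
  case/andP: hv2 => h1' h2'.
  rewrite ler_pXn2r ?nnegrE //; lra.
have hx : a * (C * e * v) ^+ 2 < e.
  have : a * (C * e * v) ^+ 2 = e * (a * C ^+ 2 * e) * v ^+ 2 by ring.
  move=> ->.
  have hv0 : 0 < v ^+ 2 by rewrite exprn_gt0 //; lra.
  have : e * (a * C ^+ 2 * e) * v ^+ 2 <= e * ((1 - C * e) ^+ 2 - e) * v ^+ 2.
    apply: ler_wpM2r; first exact: ltW.
    apply: ler_wpM2l; first exact: ltW. lra.
  have : e * ((1 - C * e) ^+ 2 - e) * v ^+ 2 = e * ((1 - C * e) * v) ^+ 2 - e ^+ 2 * v ^+ 2 by ring.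
  have : 0 < e ^+ 2 * v ^+ 2 by rewrite mulr_gt0 // exprn_gt0.
  have : e * ((1 - C * e) * v) ^+ 2 <= e by exact: ler_piMr (ltW he) hw.
  lra.
have : a * (v - 1) ^+ 2 <= a * (C * e * v) ^+ 2 by apply: ler_wpM2l => //; lra.
have : v * (a * v) + 1 - 2 * (a * v) = a * (v - 1) ^+ 2 - e by rewrite ea; ring.
lra.
Qed.


Lemma termlow_gen (R : realType) (a : R) (x y : nat) : 1 < a ->
  1 + (1 - a^-1) * (x%:R - y%:R) <= a ^+ x / a ^+ y /\
  ((y < x)%N -> 1 + (1 - a^-1) * (x%:R - y%:R) < a ^+ x / a ^+ y).
Proof.
move=> ha.
have a0 : a != 0 by rewrite gt_eqF //; lra.
have ai : a * a^-1 = 1 by rewrite mulfV.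
have ai0 : 0 < a^-1 by rewrite invr_gt0; lra.
have hd : 0 < (a - 1) - (1 - a^-1).
  have -> : (a - 1) - (1 - a^-1) = (a - 1) ^+ 2 * a^-1 by rewrite expr2; field.
  rewrite mulr_gt0 // exprn_gt0 //; lra.
case: (leqP y x) => hxy.
  have ex : a ^+ x / a ^+ y = a ^+ (x - y).
    by rewrite -{1}(subnK hxy) exprD mulfK // expf_neq0.
  rewrite ex.
  have hb := @bern R (a - 1) (x - y); rewrite (_ : 1 + (a - 1) = a) in hb; last by ring.
  have hb' := hb (_ : -1 <= a - 1).
  have hn : 0 <= (x - y)%:R :> R by rewrite ler0n.
  rewrite -natrB //.
  split.
    have := hb' ltac:(lra).
    have : (x - y)%:R * (1 - a^-1) <= (x - y)%:R * (a - 1) by apply: ler_wpM2l => //; lra.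
    lra.
  move=> hlt.
  have hn' : 0 < (x - y)%:R :> R by rewrite ltr0n subn_gt0.
  have := hb' ltac:(lra).
  have : (x - y)%:R * (1 - a^-1) < (x - y)%:R * (a - 1) by rewrite ltr_pM2l //; lra.
  lra.
split; last by move=> h; exfalso; move: h; rewrite ltnNge ltnW.
have ex : a ^+ x / a ^+ y = (a^-1) ^+ (y - x).
  rewrite -{1}(subnK (ltnW hxy)) exprD exprVn; field; by rewrite ?expf_neq0.
rewrite ex.
have hb := @bern R (a^-1 - 1) (y - x); rewrite (_ : 1 + (a^-1 - 1) = a^-1) in hb; last by ring.
have := hb ltac:(lra).
rewrite natrB ?(ltnW hxy) //.
have -> : (1 - a^-1) * (x%:R - y%:R) = (y%:R - x%:R) * (a^-1 - 1) by ring.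
lra.
Qed.

Set Implicit Arguments. Unset Strict Implicit.

Lemma subadd (R : realType) (I : Type) (r : seq I) (P : pred I) (x : I -> R) :
  (forall i, P i -> 0 <= x i <= 1) ->
  1 - \prod_(i <- r | P i) x i <= \sum_(i <- r | P i) (1 - x i).
Proof.
move=> hx.
suff [] : 1 - \prod_(i <- r | P i) x i <= \sum_(i <- r | P i) (1 - x i) /\
   0 <= \prod_(i <- r | P i) x i <= 1 by [].
apply: (big_rec2 (fun s p => 1 - p <= s /\ 0 <= p <= 1)).
  by split; [rewrite subrr | rewrite ler01 lexx].
move=> i s p Pi [h1 /andP[h2 h3]].
have /andP[h4 h5] := hx i Pi.
split; last (apply/andP; split); [nra|nra|nra].
Qed.

Definition phi (R : realType) d (w : 'I_d -> R) (x : 'rV[R]_d) : R :=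
  \sum_j w j * x ord0 j.
Definition pt (R : realType) d (a : R) (e : 'I_d -> nat) : 'rV[R]_d :=
  \row_j a ^+ e j.
Definition wlo (R : realType) d (a : R) (t : 'I_d -> nat) : 'I_d -> R :=
  fun j => (a ^+ t j)^-1.
Definition wup (R : realType) d (a : R) (u : 'I_d -> nat) : 'I_d -> R :=
  fun j => if (0 < u j)%N then (a ^+ u j)^-1 else 0.
Definition sup (R : realType) d (u : 'I_d -> nat) : R :=
  \sum_j (if (0 < u j)%N then 1 else 0).

Lemma phi_pt (R : realType) d (a : R) w e :
  phi w (@pt R d a e) = \sum_j w j * a ^+ e j.
Proof. by apply: eq_bigr => j _; rewrite mxE. Qed.

Lemma le_sum_nat d (p : 'I_d -> nat) j : (p j <= \sum_i p i)%N.
Proof. by rewrite (bigD1 j) //= leq_addr. Qed.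

Lemma up (R : realType) (a : R) d (k : nat) (p u : 'I_d -> nat) :
  1 < a -> (k ^ 2)%:R * (a - 1) <= 1 -> (\sum_j p j)%N = k ->
  (forall j, (u j <= k)%N) -> (k.+1 <= \sum_j u j)%N ->
  phi (wup a u) (pt a p) < sup R u.
Proof.
move=> ha hk hp hu hs.
have a0 : 0 < a by lra.
have apos n : 0 < a ^+ n by rewrite exprn_gt0.
have [j1 hj1] : exists j, (0 < u j)%N.
  case: (pickP (fun j => 0 < u j)%N) => [j hj|h0]; first by exists j.
  exfalso; move: hs; rewrite big1 // => j _.
  by move: (h0 j); rewrite lt0n => /negbFE/eqP.
case: (@arg_minnP _ j1 (fun j => 0 < u j)%N u hj1) => js hjs hmin.
set us := u js in hjs hmin.
have hkpos : (0 < k)%N by apply: leq_trans hjs (hu js).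
set w := wup a u.
set Ws := (a ^+ us)^-1.
have hw j : 0 <= w j <= Ws.
  rewrite /w /wup; case: ifP => h.
    rewrite invr_ge0 ltW //= lef_pV2 ?posrE // ler_eXn2l //; exact: hmin.
  by rewrite lexx invr_ge0 ltW.
rewrite phi_pt.
have e1 : \sum_j w j * a ^+ p j = \sum_j w j + \sum_j w j * (a ^+ p j - 1).
  by rewrite -big_split; apply: eq_bigr => j _ /=; ring.
have h2 : k%:R * \sum_j w j * (a ^+ p j - 1) <= k%:R * (Ws * (a ^+ k - 1)).
  rewrite mulr_sumr.
  apply: (@le_trans _ _ (\sum_j Ws * (a ^+ k - 1) * (p j)%:R)).
    apply: ler_sum => j _.
    have hc := @convp R a (p j) k (ltW ha) (leq_trans (le_sum_nat p j) (eq_leq hp)).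
    have /andP[hw1 hw2] := hw j.
    have hak : 0 <= a ^+ k - 1 by rewrite subr_ge0 exprn_ege1 // ltW.
    have hpj : 0 <= (p j)%:R :> R by rewrite ler0n.
    have : w j * (k%:R * (a ^+ p j - 1)) <= w j * ((p j)%:R * (a ^+ k - 1)) by apply: ler_wpM2l.
    have : w j * ((p j)%:R * (a ^+ k - 1)) <= Ws * ((p j)%:R * (a ^+ k - 1)).
      by apply: ler_wpM2r => //; rewrite mulr_ge0.
    have -> : k%:R * (w j * (a ^+ p j - 1)) = w j * (k%:R * (a ^+ p j - 1)) by ring.
    have -> : Ws * (a ^+ k - 1) * (p j)%:R = Ws * ((p j)%:R * (a ^+ k - 1)) by ring.
    lra.
  by rewrite -mulr_sumr -natr_sum hp mulrC.
have h3 : \sum_j w j * (a ^+ p j - 1) <= Ws * (a ^+ k - 1).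
  by rewrite ler_pM2l ?ltr0n in h2.
have e2 : sup R u - \sum_j w j = \sum_j (1 - (a ^+ u j)^-1).
  rewrite /sup -sumrB; apply: eq_bigr => j _; rewrite /w /wup.
  case: ifP => h; first done. move: h => /negbT; rewrite lt0n negbK => /eqP ->. by rewrite expr0 invr1 !subrr.
rewrite [in RHS](bigD1 js) //= in e2.
set B := (\sum_(j | j != js) u j)%N.
have hB : (\sum_j u j = us + B)%N by rewrite (bigD1 js).
have h4 : 1 - (a ^+ B)^-1 <= \sum_(j | j != js) (1 - (a ^+ u j)^-1).
  have -> : (a ^+ B)^-1 = \prod_(j | j != js) (a ^+ u j)^-1.
    by rewrite prodfV prodrXr.
  apply: subadd => j _.
  by rewrite invr_ge0 ltW //= invr_le1 ?exprn_ege1 // ?ltW ?unitfE ?gt_eqF.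
have hus : (us <= k)%N by apply: hu.
set c := (k - us)%N.
have hc1 : (c.+1 <= k)%N by rewrite /c; lia.
have hkey := @keyineq R a c ha.
have hk2 : ((c.+1) ^ 2)%:R * (a - 1) <= 1.
  apply: le_trans hk; apply: ler_wpM2r; first lra.
  by rewrite ler_nat leq_exp2r.
have {}hkey := hkey hk2.
have eW : Ws * (a ^+ k - 1) = a ^+ c - Ws.
  rewrite /Ws -(subnK hus) -/c exprD; field; by rewrite gt_eqF.
have hBc : (c.+1 <= B)%N by rewrite /c; lia.
have hB2 : (a ^+ B)^-1 <= (a ^+ c.+1)^-1.
  by rewrite lef_pV2 ?posrE // ler_eXn2l.
rewrite -/us -/Ws in e2. lra.
Qed.


Lemma low (R : realType) (a : R) d (t t' : 'I_d -> nat) : 1 < a ->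
  (\sum_j t j = \sum_j t' j)%N -> (exists j, t j != t' j) ->
  d%:R < phi (wlo a t') (pt a t).
Proof.
move=> ha hs [j0 hj0].
have [j1 hj1] : exists j, (t' j < t j)%N.
  case: (pickP (fun j => t' j < t j)%N) => [j hj|h0]; first by exists j.
  exfalso.
  have hle j : (t j <= t' j)%N by move: (h0 j); rewrite ltnNge => /negbFE.
  have hlt : (t j0 < t' j0)%N by rewrite ltn_neqAle hj0 hle.
  move: hs; rewrite (bigD1 j0) //= [X in _ = X](bigD1 j0) //=.
  have : (\sum_(j | true && (j != j0)) t j <= \sum_(j | true && (j != j0)) t' j)%N.
    by apply: leq_sum => j _; exact: hle.
  move=> h1 h2; have := leq_add hlt h1; by rewrite addSn h2 ltnn.
rewrite phi_pt.
set cc := 1 - a^-1.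
have hT j : 1 + cc * ((t j)%:R - (t' j)%:R) <= wlo a t' j * a ^+ t j.
  rewrite /wlo [_^-1 * _]mulrC; exact: (@termlow_gen R a (t j) (t' j) ha).1.
have hT1 : 1 + cc * ((t j1)%:R - (t' j1)%:R) < wlo a t' j1 * a ^+ t j1.
  rewrite /wlo [_^-1 * _]mulrC; exact: (@termlow_gen R a (t j1) (t' j1) ha).2 hj1.
have e : \sum_j (1 + cc * ((t j)%:R - (t' j)%:R)) = d%:R.
  rewrite big_split /= -mulr_sumr sumrB -!natr_sum hs subrr mulr0 addr0.
  by rewrite sumr_const card_ord.
rewrite -e (bigD1 j1) //= [X in _ < X](bigD1 j1) //=.
have : \sum_(j | true && (j != j1)) (1 + cc * ((t j)%:R - (t' j)%:R)) <= \sum_(j | true && (j != j1)) wlo a t' j * a ^+ t j.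
  by apply: ler_sum => j _; exact: hT.
lra.
Qed.

Lemma low_le (R : realType) (a : R) d (t n : 'I_d -> nat) : 1 < a ->
  (forall j, n j <= t j)%N -> phi (wlo a t) (pt a n) <= d%:R.
Proof.
move=> ha hn; rewrite phi_pt.
rewrite -[d in X in _ <= X]card_ord -sumr_const.
apply: ler_sum => j _; rewrite /wlo.
have hp : 0 < a ^+ t j by rewrite exprn_gt0 //; lra.
by rewrite mulrC ler_pdivrMr // mul1r ler_eXn2l.
Qed.


Lemma phi_lin (R : realType) d (w : 'I_d -> R) (x y : 'rV[R]_d) t :
  phi w (t *: x + (1 - t) *: y) = t * phi w x + (1 - t) * phi w y.
Proof.
rewrite /phi !mulr_sumr -big_split; apply: eq_bigr => j _ /=.
by rewrite !mxE; ring.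
Qed.

Lemma cc_le (R : realType) (t p q c : R) : 0 <= t -> t <= 1 -> p <= c -> q <= c ->
  t * p + (1 - t) * q <= c.
Proof. move=> *; nra. Qed.
Lemma cc_lt (R : realType) (t p q c : R) : 0 <= t -> t <= 1 -> p < c -> q < c ->
  t * p + (1 - t) * q < c.
Proof.
move=> h0 h1 hp hq.
have h2 : (1 - t) * q <= (1 - t) * c by apply: ler_wpM2l; lra.
have [->|ht] := eqVneq t 0; first lra.
have h3 : t * p < t * c by rewrite ltr_pM2l // lt_def ht h0.
lra.
Qed.
Lemma cc_gt (R : realType) (t p q c : R) : 0 <= t -> t <= 1 -> c < p -> c < q ->
  c < t * p + (1 - t) * q.
Proof.
move=> h0 h1 hp hq.
have := @cc_lt R t (- p) (- q) (- c) h0 h1; lra.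
Qed.

Lemma phi_wup_self (R : realType) (a : R) d (u : 'I_d -> nat) : 1 < a ->
  phi (wup a u) (pt a u) = sup R u.
Proof.
move=> ha; rewrite phi_pt; apply: eq_bigr => j _; rewrite /wup.
case: ifP => _; last by rewrite mul0r.
rewrite mulVf // gt_eqF // exprn_gt0 //; lra.
Qed.

Lemma sum_tuple_ev n k (t : n.-tuple 'I_k) :
  (\sum_(i <- t) (i : nat))%N = (\sum_j (tnth t j : nat))%N.
Proof. by rewrite big_tuple. Qed.


Theorem theorem2 (R : realType) (alpha : R) (d : nat) :
  1 < alpha -> (1 < d)%N ->
  let k := Num.truncn (Num.sqrt ((alpha - 1)^-1)) in
  helly_number_ge (@Ld R d alpha) 'C((k + d - 1)%N, (d - 1)%N).
Proof.
move=> ha hd k.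
case: d hd => [//|d] _ h hh.
have he : 0 < alpha - 1 by lra.
have hk : (k ^ 2)%:R * (alpha - 1) <= 1.
  have hs0 : 0 <= Num.sqrt ((alpha - 1)^-1) by apply: sqrtr_ge0.
  have h1 : k%:R <= Num.sqrt ((alpha - 1)^-1) by rewrite /k truncn_le.
  have h2 : (k ^ 2)%:R <= (alpha - 1)^-1.
    rewrite natrX -(@sqr_sqrtr _ ((alpha - 1)^-1)); last by rewrite invr_ge0 ltW.
    by rewrite ler_pXn2r ?nnegrE ?ler0n.
  by rewrite -(ler_pM2r he) mulVf ?gt_eqF // in h2.
pose T := (d.+1).-tuple 'I_k.+1.
pose E : {set T} := [set t : T | (\sum_(i <- t) (i : nat))%N == k].
have hE : #|E| = 'C(d + k, d) by apply: card_ord_partitions.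
have -> : (k + d.+1 - 1 = d + k)%N by lia.
have -> : (d.+1 - 1 = d)%N by lia.
rewrite -hE leqNgt; apply/negP => hlt.
pose ev (t : T) (j : 'I_d.+1) : nat := tnth t j.
have evk t j : (ev t j <= k)%N by rewrite /ev -ltnS ltn_ord.
have evsum t : t \in E -> (\sum_j ev t j)%N = k.
  by rewrite inE sum_tuple_ev => /eqP.
pose G (x : 'rV[R]_d.+1) := (forall j, x ord0 j <= alpha ^+ k) /\
  (forall u : 'I_d.+1 -> nat, (forall j, u j <= k)%N -> (k.+1 <= \sum_j u j)%N ->
     phi (wup alpha u) x < sup R u).
pose F (i : 'I_#|E|) (x : 'rV[R]_d.+1) :=
  G x /\ d.+1%:R < phi (wlo alpha (ev (enum_val i))) x.
have hpos n : 0 < alpha ^+ n by rewrite exprn_gt0 //; lra.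
have [x [hLx hFx]] : exists x : 'rV[R]_d.+1, Ld alpha x /\ forall i, F i x.
  apply: (hh _ F).
  - move=> i x y t hx hy ht0 ht1; split; [split|].
    + move=> j; rewrite !mxE; apply: cc_le => //; [exact: hx.1.1 | exact: hy.1.1].
    + move=> u hu hs; rewrite phi_lin; apply: cc_lt => //;
        [exact: hx.1.2 | exact: hy.1.2].
    + rewrite phi_lin; apply: cc_gt => //; [exact: hx.2 | exact: hy.2].
  - move=> I hI.
    have [j0 hj0] : exists j0, j0 \notin I.
      have : (0 < #|~: I|)%N.
        have := cardsC I; rewrite card_ord; lia.
      by case/card_gt0P => j0; rewrite inE => ?; exists j0.
    pose t0 := enum_val j0.
    have t0E : t0 \in E by apply: enum_valP.
    exists (pt alpha (ev t0)); split.
      by move=> j; exists (ev t0 j); rewrite mxE.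
    move=> i hi; split; [split|].
    + by move=> j; rewrite mxE ler_eXn2l.
    + move=> u hu hs; apply: (@up R alpha d.+1 k) => //; exact: evsum.
    + apply: low => //; first by rewrite !evsum // enum_valP.
      have hne : enum_val i != t0.
        apply/eqP => /enum_val_inj eq; by rewrite -eq hi in hj0.
      case: (pickP (fun j => ev t0 j != ev (enum_val i) j)) => [j hj|h0].
        by exists j.
      exfalso; move/eqP: hne; apply; apply: eq_from_tnth => j.
      by apply: val_inj; move: (h0 j) => /negbFE/eqP.
have [n hn] := fin_all_exists hLx.
have xE : x = pt alpha n by apply/matrixP => i j; rewrite mxE (ord1 i) hn.
subst x.
have i0 : 'I_#|E| by exact: Ordinal (leq_ltn_trans (leq0n h) hlt).
have [[hbox hup] _] := hFx i0.
case: (leqP (\sum_j n j)%N k) => hsn.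
  pose t : T := [tuple inord (n j + (if j == ord0 then k - \sum_j n j else 0))%N | j < d.+1].
  have evt j : ev t j = (n j + (if j == ord0 then k - \sum_j n j else 0))%N.
    rewrite /ev tnth_mktuple inordK // ltnS.
    have := le_sum_nat n j; case: ifP => _; lia.
  have tE : t \in E.
    rewrite inE sum_tuple_ev; apply/eqP.
    rewrite (eq_bigr _ (fun j _ => evt j)) big_split /=.
    set S := (\sum_j n j)%N in hsn *.
    rewrite [X in (S + X)%N](bigD1 ord0) //= big1 ?addn0; first lia.
    by move=> j /negbTE ->.
  have := (hFx (enum_rank_in tE t)).2.
  rewrite enum_rankK_in // => hlt2.
  have : phi (wlo alpha (ev t)) (pt alpha n) <= d.+1%:R.
    by apply: low_le => // j; rewrite evt leq_addr.
  lra.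
case: (pickP (fun j => k < n j)%N) => [j hj|h0].
  by have := hbox j; rewrite mxE ler_eXn2l // leqNgt hj.
have hnk : forall j, (n j <= k)%N.
  by move=> j; move: (h0 j); rewrite ltnNge => /negbFE.
by have := hup n hnk hsn; rewrite phi_wup_self // ltxx.
Qed.
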